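(* Let $A$ be a block tridiagonal matrix satisfying the standing hypotheses (H), and write $A^{-1}=[Z_{ij}]$ with $Z_{ij}\in\mathbb{C}^{m\times m}$, $i,j=1,\dots,n$. Then $$\|Z_{ij}\|\le \|Z_{jj}\|\prod_{k=i}^{j-1}\tau_k\quad\text{for all } i<j,\qquad \|Z_{ij}\|\le \|Z_{jj}\|\prod_{k=j+1}^{i}\omega_k\quad\text{for all } i>j.$$ Moreover, for $i=1,\dots,n$, $$\frac{\|I\|}{\|A_i\|+\tau_{i-1}\|C_{i-1}\|+\omega_{i+1}\|B_i\|}\le\|Z_{ii}\|,$$ and, whenever $\|A_i^{-1}\|^{-1}-\tau_{i-1}\|C_{i-1}\|-\omega_{i+1}\|B_i\|>0$, $$\|Z_{ii}\|\le\frac{\|I\|}{\|A_i^{-1}\|^{-1}-\tau_{i-1}\|C_{i-1}\|-\omega_{i+1}\|B_i\|},$$ where $C_0=B_n=0$ and $\tau_0=\omega_{n+1}=0$.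
   Context: $\|\cdot\|$ is a submultiplicative matrix norm on $\mathbb{C}^{m\times m}$, $n\ge 2$, and $A$ is block tridiagonal with diagonal blocks $A_1,\dots,A_n$, superdiagonal blocks $B_1,\dots,B_{n-1}$ (block $(i,i+1)$) and subdiagonal blocks $C_1,\dots,C_{n-1}$ (block $(i+1,i)$), all in $\mathbb{C}^{m\times m}$; set $C_0=B_n=0$. Standing hypotheses (H): $A$ is nonsingular; $B_i$ and $C_i$ are nonsingular for $i=1,\dots,n-1$; every $A_i$ is nonsingular and $\|A_i^{-1}C_{i-1}\|+\|A_i^{-1}B_i\|\le 1$ for $i=1,\dots,n$ (row block diagonal dominance); and $\|A_1^{-1}B_1\|<1$, $\|A_n^{-1}C_{n-1}\|<1$. For $i=1,\dots,n$: $\tau_i=\dfrac{\|A_i^{-1}B_i\|}{1-\|A_i^{-1}C_{i-1}\|}$ and $\omega_i=\dfrac{\|A_i^{-1}C_{i-1}\|}{1-\|A_i^{-1}B_i\|}$. *)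

(* Defs.v *)
From HB Require Import structures.
From mathcomp Require Import all_boot all_order all_algebra.
Set Implicit Arguments. Unset Strict Implicit. Unset Printing Implicit Defensive.
Import Order.TTheory GRing.Theory Num.Theory.
Local Open Scope ring_scope.

(* A submultiplicative matrix norm on 'M[C]_m, C a numeric closed field
   (the complex-number structure of MathComp; e.g. algC).  Values lie in C
   and are nonnegative (hence real). *)
Definition submult_mxnorm (C : numClosedFieldType) (m : nat)
  (nrm : 'M[C]_m -> C) : Prop :=
  [/\ (forall X, 0 <= nrm X),
      (forall X, nrm X = 0 -> X = 0),
      (forall (a : C) X, nrm (a *: X) = `|a| * nrm X),
      (forall X Y, nrm (X + Y) <= nrm X + nrm Y) &
      (forall X Y, nrm (X *m Y) <= nrm X * nrm Y)].

Definition bsz (n m : nat) : 'I_n -> nat := fun _ => m.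
Arguments bsz : clear implicits.

(* Block tridiagonal matrix, paper's 1-based indexing of the block
   sequences Ab (diagonal A_i), Bb (superdiagonal B_i at (i,i+1)),
   Cb (subdiagonal C_i at (i+1,i)); the block with 0-based index (i,j)
   is the paper's block (i+1,j+1). *)
Definition tridiag (C : numClosedFieldType) (n m : nat)
  (Ab Bb Cb : nat -> 'M[C]_m) : 'M[C]_(\sum_(i < n) bsz n m i) :=
  @mxblock C n n (bsz n m) (bsz n m)
    (fun i j => if val j == val i then Ab (val i).+1
                else if val j == (val i).+1 then Bb (val i).+1
                else if val i == (val j).+1 then Cb (val j).+1
                else 0).

Definition blk (C : numClosedFieldType) (n m : nat)
  (Z : 'M[C]_(\sum_(i < n) bsz n m i)) (i j : 'I_n) : 'M[C]_m :=
  @submxblock C n n (bsz n m) (bsz n m) Z i j.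

Definition Cext (C : numClosedFieldType) (m : nat) (Cb : nat -> 'M[C]_m) (i : nat)
  : 'M[C]_m := if i == 0%N then 0 else Cb i.
Definition Bext (C : numClosedFieldType) (n m : nat) (Bb : nat -> 'M[C]_m) (i : nat)
  : 'M[C]_m := if i == n then 0 else Bb i.

Definition tau (C : numClosedFieldType) (n m : nat) (nrm : 'M[C]_m -> C)
  (Ab Bb Cb : nat -> 'M[C]_m) (i : nat) : C :=
  if i == 0%N then 0 else
  nrm (invmx (Ab i) *m Bext n Bb i) / (1 - nrm (invmx (Ab i) *m Cext Cb i.-1)).

Definition omega (C : numClosedFieldType) (n m : nat) (nrm : 'M[C]_m -> C)
  (Ab Bb Cb : nat -> 'M[C]_m) (i : nat) : C :=
  if i == n.+1 then 0 else
  nrm (invmx (Ab i) *m Cext Cb i.-1) / (1 - nrm (invmx (Ab i) *m Bext n Bb i)).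

(* Main.v *)
Require Import Defs.
From HB Require Import structures.
From mathcomp Require Import all_boot all_order all_algebra zify.
Import Order.TTheory GRing.Theory Num.Theory.
Local Open Scope ring_scope.
Set Implicit Arguments. Unset Strict Implicit.

Definition zn (C : numClosedFieldType) (m n : nat) (V : 'M[C]_(\sum_(i < n) bsz n m i))
  (i j : nat) : 'M[C]_m :=
  match @insub nat (fun x => (x < n)%N) 'I_n i, @insub nat (fun x => (x < n)%N) 'I_n j with
  | Some i', Some j' => blk V i' j'
  | _, _ => 0 end.

Arguments zn {C m n}.

Lemma znE C m n V (i j : 'I_n) : @zn C m n V i j = blk V i j.
Proof. by rewrite /zn !valK. Qed.

Lemma zn_out C m n V i j : (n <= i)%N -> @zn C m n V i j = 0.
Proof. by move=> h; rewrite /zn insubN // -leqNgt. Qed.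

Lemma sum_if_eq (C : numClosedFieldType) m n (f : nat -> 'M[C]_m) c :
  \sum_(k < n) (if val k == c then f (val k) else 0) = if (c < n)%N then f c else 0.
Proof.
case: ltnP => h.
  rewrite (bigD1 (Ordinal h)) //= eqxx big1 ?addr0 // => k hk.
  by case: eqP => // e; case/eqP: hk; apply/val_inj.
by rewrite big1 // => k _; rewrite ifN //; apply/eqP => e; have := ltn_ord k; rewrite e; move: h; clear; lia.
Qed.

Lemma blk_eq (C : numClosedFieldType) (m n : nat) (Ab Bb Cb : nat -> 'M[C]_m)
  (HT : tridiag n Ab Bb Cb \in unitmx) (i j : 'I_n) :
  \sum_(k < n) ((if val k == val i then Ab (val i).+1
                else if val k == (val i).+1 then Bb (val i).+1
                else if val i == (val k).+1 then Cb (val k).+1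
                else 0) *m blk (invmx (tridiag n Ab Bb Cb)) k j)
  = if i == j then 1%:M else 0.
Proof.
have := mulmxV HT.
rewrite {1}/tridiag -{1}(submxblockK (invmx (tridiag n Ab Bb Cb))) mul_mxblock.
rewrite -(mxdiagZ (p_ := bsz n m) 1).
move/(congr1 (fun M => submxblock M i j)); rewrite /mxdiag !mxblockK.
by rewrite conform_mx_id => ->.
Qed.

Lemma bext_z (C : numClosedFieldType) m n (Bb : nat -> 'M[C]_m) V k j :
  Bext n Bb k *m @zn C m n V k j = if (k < n)%N then Bb k *m zn V k j else 0.
Proof.
rewrite /Bext; case: ltnP => h; first by rewrite ifN //; apply/eqP; lia.
by rewrite (@zn_out C m n V k j h) mulmx0.
Qed.

Lemma recur (C : numClosedFieldType) (m n : nat) (Ab Bb Cb : nat -> 'M[C]_m)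
  (HT : tridiag n Ab Bb Cb \in unitmx) (i j : nat) : (i < n)%N -> (j < n)%N ->
  let z := zn (invmx (tridiag n Ab Bb Cb)) in
  Cext Cb i *m z i.-1 j + Ab i.+1 *m z i j + Bext n Bb i.+1 *m z i.+1 j
   = if i == j then 1%:M else 0.
Proof.
move=> hi hj z.
have := blk_eq HT (Ordinal hi) (Ordinal hj).
rewrite -(inj_eq val_inj) /= => <-.
set g := fun k : nat => if i is 0 then 0 else Cb i *m z k j.
rewrite (eq_bigr (fun k : 'I_n => (if val k == i then Ab i.+1 *m z (val k) j else 0)
   + (if val k == i.+1 then Bb i.+1 *m z (val k) j else 0)
   + (if val k == i.-1 then g (val k) else 0))); last first.
  move=> k _; rewrite -[blk _ k _](znE) /= -/z /g.
  case: i hi {g} => [|i] hi /=.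
    by case: (nat_of_ord k) => [|[|k0]] /=; rewrite ?mul0mx ?addr0 ?add0r.
  case: eqP => [e|ne1]; first by rewrite e !ifN ?mul0mx ?addr0 //; apply/eqP; lia.
  case: eqP => [e|ne2]; first by rewrite e !ifN ?mul0mx ?addr0 ?add0r //; apply/eqP; lia.
  case: eqP => [e|ne3].
    have ek : nat_of_ord k = i by lia.
    by rewrite ek eqxx !add0r.
  by rewrite ifN ?mul0mx ?addr0 //; apply/eqP; lia.
rewrite !big_split /= (@sum_if_eq _ _ _ (fun k => Ab i.+1 *m z k j))
  (@sum_if_eq _ _ _ (fun k => Bb i.+1 *m z k j)) sum_if_eq hi /g.
rewrite {}/g bext_z; case: i hi => [|i] hi /=.
  by rewrite /Cext eqxx mul0mx add0r if_same addr0.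
rewrite (_ : (i < n)%N = true); last by apply/idP; lia.
by rewrite /Cext /= [RHS]addrC addrA.
Qed.

Lemma key (F : numFieldType) (a b u x y tt : F) :
  0 <= a -> a < 1 -> 0 <= x -> 0 <= tt -> tt <= 1 ->
  u <= tt * x -> x <= a * u + b * y -> x <= b / (1 - a) * y.
Proof.
move=> a0 a1 x0 t0 t1 ux h.
have h1 : a * u <= a * x.
  apply: (le_trans (ler_wpM2l a0 ux)); apply: ler_wpM2l => //; exact: ler_piMl.
have h2 : x * (1 - a) <= b * y.
  rewrite mulrBr mulr1 lerBlDr; apply: (le_trans h).
  by rewrite [b * y + _]addrC lerD2r [x * a]mulrC.
by rewrite mulrAC ler_pdivlMr ?subr_gt0.
Qed.

Lemma nrm0 (C : numClosedFieldType) m (nrm : 'M[C]_m -> C) :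
  submult_mxnorm nrm -> nrm 0 = 0.
Proof.
case=> _ _ hs _ _; have := hs 0 0; rewrite scale0r normr0 mul0r //.
Qed.

Lemma nrmN (C : numClosedFieldType) m (nrm : 'M[C]_m -> C) X :
  submult_mxnorm nrm -> nrm (- X) = nrm X.
Proof.
case=> _ _ hs _ _; by rewrite -scaleN1r hs normrN1 mul1r.
Qed.

Lemma nrm_pos (C : numClosedFieldType) m (nrm : 'M[C]_m -> C) X :
  submult_mxnorm nrm -> (0 < m)%N -> X \in unitmx -> 0 < nrm X.
Proof.
move=> hn m0 hX; case: (hn) => h0 h1 _ _ _.
rewrite lt0r h0 andbT; apply/eqP => /h1 X0.
have := mulmxV hX; rewrite X0 mul0mx => /matrixP/(_ (Ordinal m0) (Ordinal m0)).
by rewrite !mxE eqxx /= => /eqP; rewrite eq_sym oner_eq0.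
Qed.

Unset Implicit Arguments. Set Strict Implicit.
Theorem theorem2p6 (C : numClosedFieldType) (m n : nat) (nrm : 'M[C]_m -> C)
  (Ab Bb Cb : nat -> 'M[C]_m) :
  submult_mxnorm nrm ->
  (2 <= n)%N ->
  tridiag n Ab Bb Cb \in unitmx ->
  (forall i, (1 <= i < n)%N -> Bb i \in unitmx /\ Cb i \in unitmx) ->
  (forall i, (1 <= i <= n)%N ->
     Ab i \in unitmx /\
     nrm (invmx (Ab i) *m Cext Cb i.-1) + nrm (invmx (Ab i) *m Bext n Bb i) <= 1) ->
  nrm (invmx (Ab 1%N) *m Bb 1%N) < 1 ->
  nrm (invmx (Ab n) *m Cb n.-1) < 1 ->
  let Z := blk (invmx (tridiag n Ab Bb Cb)) in
  let t := tau n nrm Ab Bb Cb in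
  let w := omega n nrm Ab Bb Cb in
  (* 0-based block indices i, j correspond to the paper's i+1, j+1 *)
  (forall i j : 'I_n, (i < j)%N ->
     nrm (Z i j) <= nrm (Z j j) * \prod_((i.+1) <= k < j.+1) t k) /\
  (forall i j : 'I_n, (j < i)%N ->
     nrm (Z i j) <= nrm (Z j j) * \prod_((j.+2) <= k < i.+2) w k) /\
  (forall i : 'I_n,
     let p := (val i).+1 in
     nrm 1%:M / (nrm (Ab p) + t p.-1 * nrm (Cext Cb p.-1) + w p.+1 * nrm (Bext n Bb p))
       <= nrm (Z i i) /\
     (0 < (nrm (invmx (Ab p)))^-1 - t p.-1 * nrm (Cext Cb p.-1) - w p.+1 * nrm (Bext n Bb p) ->
      nrm (Z i i) <= nrm 1%:M /
        ((nrm (invmx (Ab p)))^-1 - t p.-1 * nrm (Cext Cb p.-1) - w p.+1 * nrm (Bext n Bb p)))).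
Proof.
move=> hn n2 HT HBC HA H1 Hn Z t w.
set V := invmx (tridiag n Ab Bb Cb).
set z := zn V.
have ZE : forall i j : 'I_n, Z i j = z i j by move=> i j; rewrite /z znE.
have nge0 : forall X, 0 <= nrm X by case: hn.
have ntri : forall X Y, nrm (X + Y) <= nrm X + nrm Y by case: hn.
have nmul : forall X Y, nrm (X *m Y) <= nrm X * nrm Y by case: hn.
have n0 := nrm0 hn.
case: (posnP m) => [m0|m0].
  have nz : forall X, nrm X = 0.
    move=> X; suff -> : X = 0 by [].
    by apply/matrixP => i; have := ltn_ord i; rewrite {2}m0.
  split; [|split].
  - by move=> i j _; rewrite !nz mul0r.
  - by move=> i j _; rewrite !nz mul0r.
  - by move=> i /=; rewrite !nz !mul0r; split => // _; rewrite mul0r.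
pose aa i := nrm (invmx (Ab i.+1) *m Cext Cb i).
pose bb i := nrm (invmx (Ab i.+1) *m Bext n Bb i.+1).
pose N i j := nrm (z i j).
have Aunit : forall i, (i < n)%N -> Ab i.+1 \in unitmx.
  by move=> i hi; apply: (HA i.+1 _).1; rewrite ltn0Sn.
have stepN : forall i j, (i < n)%N -> (j < n)%N -> i != j ->
    N i j <= aa i * N i.-1 j + bb i * N i.+1 j.
  move=> i j hi hj hij.
  have := recur HT hi hj; rewrite -/V -/z (negbTE hij).
  move/eqP; rewrite [_ + Ab i.+1 *m _]addrC -addrA addr_eq0 => /eqP e.
  rewrite /N -(mulKmx (Aunit i hi) (z i j)) e mulmxN mulmxDr !mulmxA nrmN //.
  by apply: le_trans (ntri _ _) _; apply: lerD; apply: nmul.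
have hsum : forall i, (i < n)%N -> aa i + bb i <= 1.
  by move=> i hi; apply: (HA i.+1 _).2; rewrite ltn0Sn.
have aa0 : forall i, 0 <= aa i by move=> i; apply: nge0.
have bb0 : forall i, 0 <= bb i by move=> i; apply: nge0.
have bpos : forall i, (i.+1 < n)%N -> 0 < bb i.
  move=> i hi; rewrite /bb /Bext ifN; last by apply/eqP => e; rewrite e ltnn in hi.
  apply: nrm_pos => //; rewrite unitmx_mul unitmx_inv Aunit ?(HBC i.+1 _).1 //.
  exact: ltnW.
have apos : forall i, (0 < i)%N -> (i.+1 < n)%N -> 0 < aa i.
  move=> i i0 hi; rewrite /aa /Cext ifN; last by rewrite -lt0n.
  apply: nrm_pos => //; rewrite unitmx_mul unitmx_inv Aunit ?(HBC i _).2 //.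
    by rewrite i0 ltnW.
  exact: ltnW.
have alt1 : forall i, (i.+1 < n)%N -> aa i < 1.
  move=> [|i] hi; first by rewrite /aa /Cext eqxx mulmx0 n0 ltr01.
  apply: lt_le_trans (hsum _ (ltnW hi)); by rewrite ltrDl bpos.
have blt1 : forall i, (0 < i)%N -> (i < n)%N -> bb i < 1.
  move=> i i0 hi; case: (boolP (i.+1 == n)) => [/eqP e|ne].
    by rewrite /bb /Bext e eqxx mulmx0 n0 ltr01.
  have hi' : (i.+1 < n)%N by rewrite ltn_neqAle ne hi.
  by apply: lt_le_trans (hsum _ hi); rewrite addrC ltrDl apos.
have tE : forall i, t i.+1 = bb i / (1 - aa i) by [].
have wE : forall i, (i < n)%N -> w i.+1 = aa i / (1 - bb i).
  by move=> i hi; rewrite /w /omega ifN // eqSS; apply/eqP => e; rewrite e ltnn in hi.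
have t_ge0 : forall i, (i.+1 < n)%N -> 0 <= t i.+1.
  by move=> i hi; rewrite tE divr_ge0 // subr_ge0 ltW // alt1.
have t_le1 : forall i, (i.+1 < n)%N -> t i.+1 <= 1.
  move=> i hi; rewrite tE ler_pdivrMr ?subr_gt0 ?alt1 // mul1r lerBrDr addrC.
  exact: hsum (ltnW hi).
have w_ge0 : forall i, (0 < i)%N -> (i < n)%N -> 0 <= w i.+1.
  by move=> i i0 hi; rewrite wE // divr_ge0 // subr_ge0 ltW // blt1.
have w_le1 : forall i, (0 < i)%N -> (i < n)%N -> w i.+1 <= 1.
  move=> i i0 hi; rewrite wE // ler_pdivrMr ?subr_gt0 ?blt1 // mul1r lerBrDr.
  exact: hsum.
have ClaimT : forall j, (j < n)%N -> forall i, (i < j)%N -> N i j <= t i.+1 * N i.+1 j.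
  move=> j hj; elim=> [|i IH] hij.
    apply: (@key _ (aa 0) (bb 0) (N 0%N j) _ _ 1).
    - exact: aa0.
    - by apply: alt1; lia.
    - exact: nge0.
    - exact: ler01.
    - exact: lexx.
    - by rewrite mul1r.
    - by apply: stepN; [lia|done|apply/eqP; lia].
  apply: (@key _ (aa i.+1) (bb i.+1) (N i j) _ _ (t i.+1)).
  - exact: aa0.
  - by apply: alt1; lia.
  - exact: nge0.
  - by apply: t_ge0; lia.
  - by apply: t_le1; lia.
  - by apply: IH; apply: ltnW.
  - by apply: stepN; [lia|done|apply/eqP; lia].
have ClaimW0 : forall j, (j < n)%N -> forall d i, (i + d).+1 = n -> (j < i)%N ->
    N i j <= w i.+1 * N i.-1 j.
  move=> j hj; elim=> [|d IH] i hid hji.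
    have hi : (i < n)%N by rewrite -hid addn0.
    have i0 : (0 < i)%N by apply: leq_ltn_trans hji.
    rewrite wE //; apply: (@key _ (bb i) (aa i) (N i.+1 j) _ _ 1).
    - exact: bb0.
    - exact: blt1.
    - exact: nge0.
    - exact: ler01.
    - exact: lexx.
    - by rewrite /N /z (@zn_out C m n V i.+1 j); [rewrite n0 mul1r; apply: nge0|lia].
    - by rewrite addrC; apply: stepN => //; rewrite neq_ltn hji orbT.
  have hi : (i.+1 < n)%N by rewrite -hid addnS ltnS leq_addr.
  have i0 : (0 < i)%N by apply: leq_ltn_trans hji.
  rewrite wE ?(ltnW hi) //; apply: (@key _ (bb i) (aa i) (N i.+1 j) _ _ (w i.+2)).
  - exact: bb0.
  - by apply: blt1 => //; apply: ltnW.
  - exact: nge0.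
  - exact: w_ge0.
  - exact: w_le1.
  - by apply: IH; [rewrite addSnnS|apply: ltnW].
  - by rewrite addrC; apply: stepN => //; [apply: ltnW|rewrite neq_ltn hji orbT].
have ClaimW : forall i j, (j < i)%N -> (i < n)%N -> N i j <= w i.+1 * N i.-1 j.
  move=> i j hji hi; apply: (ClaimW0 j (ltn_trans hji hi) (n - i.+1)%N i _ hji); lia.
have prodT : forall j, (j < n)%N -> forall d i, (i + d.+1 = j)%N ->
    N i j <= N j j * \prod_(i.+1 <= k < j.+1) t k.
  move=> j hj; elim=> [|d IH] i hij.
    rewrite addn1 in hij; rewrite -hij big_nat1 mulrC.
    by apply: ClaimT => //; rewrite hij.
  rewrite big_ltn; last lia.
  apply: le_trans (ClaimT j hj i _) _; first lia.
  rewrite mulrCA; apply: ler_wpM2l; first by apply: t_ge0; lia.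
  by apply: IH; lia.
have prodW : forall j, (j < n)%N -> forall d i, i = (j + d.+1)%N -> (i < n)%N ->
    N i j <= N j j * \prod_(j.+2 <= k < i.+2) w k.
  move=> j hj; elim=> [|d IH] i hij hi.
    rewrite addn1 in hij; subst i; rewrite big_nat1 mulrC.
    exact: ClaimW (ltnSn j) hi.
  rewrite hij -addSnnS addSn big_nat_recr /=; last lia.
  apply: le_trans (ClaimW (j + d.+1).+1 j _ _) _; [lia|lia|].
  rewrite mulrA mulrC; apply: ler_wpM2r; first by apply: w_ge0; lia.
  by apply: IH => //; lia.
split; [|split].
- move=> i j hij; rewrite !ZE.
  by apply: (prodT j (ltn_ord j) (j - i.+1)%N); lia.
- move=> i j hij; rewrite !ZE.
  by apply: (prodW j (ltn_ord j) (i - j.+1)%N); [lia|exact: ltn_ord].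
move=> i p; rewrite /p /= {p} !ZE.
have hi := ltn_ord i.
have := recur HT hi hi; rewrite -/V -/z eqxx => E.
set nC := nrm (Cext Cb i).
set nB := nrm (Bext n Bb i.+1).
have hC : nC * N i.-1 i <= t i * nC * N i i.
  case E0 : (nat_of_ord i) => [|i'] /=.
    by rewrite /nC E0 /Cext eqxx n0 !(mul0r, mulr0).
  rewrite [t _ * nC]mulrC -mulrA; apply: ler_wpM2l; first exact: nge0.
  by apply: ClaimT; lia.
have hB : nB * N i.+1 i <= w i.+2 * nB * N i i.
  case: (boolP (i.+1 == n)) => [/eqP e|ne].
    by rewrite /nB e /Bext eqxx n0 !(mul0r, mulr0).
  rewrite [w _ * nB]mulrC -mulrA; apply: ler_wpM2l; first exact: nge0.
  by apply: ClaimW; lia.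
have t0 : 0 <= t i.
  case E0 : (nat_of_ord i) => [|i']; first by rewrite /t /tau eqxx.
  by apply: t_ge0; lia.
have w0 : 0 <= w i.+2.
  case: (boolP (i.+1 == n)) => [/eqP e|ne].
    by rewrite /w /omega eqSS e eqxx.
  by apply: w_ge0; lia.
have nC0 : 0 <= nC by apply: nge0.
have nB0 : 0 <= nB by apply: nge0.
have s0 : 0 <= t i * nC + w i.+2 * nB by rewrite addr_ge0 // mulr_ge0.
split.
  have h1 : nrm 1%:M <= (nrm (Ab i.+1) + t i * nC + w i.+2 * nB) * N i i.
    rewrite -E !mulrDl [_ + Ab _ *m _]addrC.
    apply: le_trans (ntri _ _) _; apply: lerD; last first.
      exact: le_trans (nmul _ _) hB.
    apply: le_trans (ntri _ _) _; apply: lerD; first exact: nmul.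
    exact: le_trans (nmul _ _) hC.
  set D := (nrm (Ab i.+1) + t i * nC + w i.+2 * nB) in h1 *.
  have D0 : 0 <= D by rewrite /D -addrA addr_ge0 // nge0.
  case: (boolP (D == 0)) => [/eqP ->|Dn0]; first by rewrite invr0 mulr0 nge0.
  by rewrite ler_pdivrMr ?lt0r ?Dn0 // mulrC.
move=> hpos.
set al := nrm (invmx (Ab i.+1)) in hpos *.
set s := t i * nC + w i.+2 * nB.
have es : al^-1 - t i * nC - w i.+2 * nB = al^-1 - s by rewrite /s opprD addrA.
rewrite es in hpos *.
have al0 : 0 < al.
  rewrite lt0r nge0 andbT; apply/eqP => e; move: hpos.
  by rewrite e invr0 sub0r oppr_gt0 le_gtF.
have h2 : N i i <= al * (nrm 1%:M + s * N i i).
  have e2 : Ab i.+1 *m z i i = 1%:M - (Cext Cb i *m z i.-1 i + Bext n Bb i.+1 *m z i.+1 i).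
    by apply/esym/eqP; rewrite subr_eq -E addrA [Ab _ *m _ + _]addrC.
  have hz : N i i = nrm (invmx (Ab i.+1) *m (Ab i.+1 *m z i i)).
    by rewrite /N mulKmx // Aunit.
  rewrite {1}hz.
  apply: le_trans (nmul _ _) _; apply: ler_wpM2l; first exact: nge0.
  rewrite e2; apply: le_trans (ntri _ _) _; rewrite nrmN //; apply: lerD => //.
  rewrite /s mulrDl; apply: le_trans (ntri _ _) _; apply: lerD.
    exact: le_trans (nmul _ _) hC.
  exact: le_trans (nmul _ _) hB.
rewrite ler_pdivlMr // mulrBr lerBlDr.
have h3 : N i i * al^-1 <= nrm 1%:M + s * N i i.
  by rewrite ler_pdivrMr // mulrC.
by rewrite [N i i * s]mulrC.
Qed.
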